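(* Let $f:[0,\infty)\to\mathbb{R}$ be convex with $f(1)=0$ and $G:[0,\mathsf{D_m}(f))\to[0,\infty)$ non-decreasing with $G(0)=0$. Let $W_{Y|X}$ be a channel between finite alphabets $\mathcal{X},\mathcal{Y}$ that is permutation invariant, i.e., for every permutation $\pi$ of $\mathcal{X}$ there is a permutation $\pi'$ of $\mathcal{Y}$ with $W_{Y|X}(\pi'(y)|\pi(x))=W_{Y|X}(y|x)$ for all $x,y$. Then the uniform distribution on $\mathcal{X}$ maximizes $p_X\mapsto I_{G,f}(X;Y)$, where $Y$ is the output of $W_{Y|X}$ with input $X\sim p_X$.
   Context: For distributions $p\ll q$ on a finite set, $D_f(p\|q)=\sum_y q(y) f(p(y)/q(y))$ with $0f(0/0)=0$; $\mathsf{D_m}(f)=f(0)+\lim_{t\to\infty}f(t)/t$. $I_{G,f}(X;Y)=\min_{q_Y}\sum_x p_X(x)\,G(D_f(W_{Y|X=x}\|q_Y))$. *)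

(* Defs.v *)
From HB Require Import structures.
From mathcomp Require Import all_boot all_order all_algebra all_fingroup.
From mathcomp Require Import all_classical all_reals all_analysis.
Set Implicit Arguments. Unset Strict Implicit. Unset Printing Implicit Defensive.
Import Order.TTheory GRing.Theory Num.Theory.
Local Open Scope classical_set_scope.
Local Open Scope ring_scope.

Section Defs.
Variable R : realType.

Definition is_dist (T : finType) (p : T -> R) : Prop :=
  (forall t, 0 <= p t) /\ \sum_(t : T) p t = 1.

Definition convex_on_nonneg (f : R -> R) : Prop :=
  forall x y l, 0 <= x -> 0 <= y -> 0 <= l <= 1 ->
    f (l * x + (1 - l) * y) <= l * f x + (1 - l) * f y.

Definition Dm (f : R -> R) : \bar R :=
  ((f 0)%:E + lim (((f t / t)%:E) @[t --> +oo%R]))%E.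

(* D_f(p || q) = sum_y q(y) f(p(y)/q(y)) when p << q (with 0 f(0/0) = 0),
   and +oo when p is not absolutely continuous w.r.t. q *)
Definition Df (T : finType) (f : R -> R) (p q : T -> R) : \bar R :=
  if [forall t, (q t == 0) ==> (p t == 0)]
  then (\sum_(t : T) q t * f (p t / q t))%:E
  else +oo%E.

Definition Gbar (G : R -> R) (d : \bar R) : \bar R :=
  match d with
  | EFin r => (G r)%:E
  | +oo%E => +oo%E
  | -oo%E => -oo%E
  end.

Definition IGf (X Y : finType) (G f : R -> R) (W : X -> Y -> R) (p : X -> R)
  : \bar R :=
  ereal_inf [set (\sum_(x : X) (p x)%:E * Gbar G (Df f (W x) q))%E
            | q in [set q : Y -> R | is_dist q]].

Definition uniform_dist (T : finType) : T -> R := fun _ => (#|T|%:R)^-1.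

End Defs.

(* Main.v *)
Require Import Defs.
From HB Require Import structures.
From mathcomp Require Import all_boot all_order all_algebra all_fingroup.
From mathcomp Require Import all_classical all_reals all_analysis.
Import Order.TTheory GRing.Theory Num.Theory.
Local Open Scope ring_scope.

Lemma avg_perm (R : realType) (X : finType) (g p : X -> R) :
  \sum_x p x = 1 ->
  exists pi : {perm X}, \sum_x p x * g (pi x) <= \sum_x (#|X|%:R)^-1 * g x.
Proof.
move=> p1.
have n0 : (0 < #|X|)%N.
  case: (pickP (fun x : X => true)) => [x _|H]; first by apply/card_gt0P; exists x.
  by move: p1; rewrite big_pred0 // => /esym/eqP; rewrite oner_eq0.
pose S x := \sum_(pi : {perm X}) g (pi x).
have Sc x y : S x = S y.
  rewrite /S (reindex_inj (mulgI (tperm x y))) /=.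
  by apply: eq_bigr => pi _; rewrite permM tpermL.
pose c := #|{perm X}|%:R : R.
have Sx x : S x = c / #|X|%:R * \sum_z g z.
  have : #|X|%:R * S x = c * \sum_z g z.
    transitivity (\sum_(y : X) S y).
      have E : \sum_(y : X) S y = \sum_(y : X) S x by apply: eq_bigr => y _; apply: Sc.
      by rewrite E sumr_const mulr_natl.
    have E2 : \sum_(pi : {perm X}) \sum_z g z = c * \sum_z g z by rewrite sumr_const mulr_natl.
    rewrite -E2 /S exchange_big /=.
    apply: eq_bigr => pi _.
    by rewrite (reindex_inj (@perm_inj _ pi^-1)) /=; apply: eq_bigr => z _; rewrite permKV.
  move=> H; apply: (@mulfI _ (#|X|%:R)); first by rewrite pnatr_eq0 -lt0n.
  by rewrite H mulrA [_ * (c / _)]mulrCA divff ?mulr1 // pnatr_eq0 -lt0n.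
apply: contrapT => H.
have H' (pi : {perm X}) : \sum_x (#|X|%:R)^-1 * g x < \sum_x p x * g (pi x).
  by rewrite ltNge; apply/negP => Hle; apply: H; exists pi.
have hp : has xpredT (index_enum {perm X}) by apply/hasP; exists 1%g; rewrite ?mem_index_enum.
have := ltr_sum hp (fun pi _ => H' pi).
rewrite sumr_const exchange_big /=.
have -> : \sum_j \sum_(i : {perm X}) p j * g (i j) = c / #|X|%:R * \sum_z g z.
  rewrite (eq_bigr (fun x => p x * (c / #|X|%:R * \sum_z g z))).
    by rewrite -mulr_suml p1 mul1r.
  by move=> x _; rewrite -(Sx x) /S mulr_sumr.
rewrite -mulr_sumr.
suff -> : c / #|X|%:R * \sum_z g z = (#|X|%:R^-1 * \sum_z g z) *+ #|{perm X}| by rewrite ltxx.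
by rewrite -[_ *+ #|{perm X}|]mulr_natl mulrA.
Qed.

Lemma Df_perm (R : realType) (Y : finType) (f : R -> R) (w w' q : Y -> R)
  (s : {perm Y}) : (forall y, w' (s y) = w y) -> Df f w (q \o s) = Df f w' q.
Proof.
move=> Hw; rewrite /Df.
have -> : [forall t, ((q \o s) t == 0) ==> (w t == 0)] =
          [forall t, (q t == 0) ==> (w' t == 0)].
  apply/forallP/forallP => H t.
    by have := H ((s^-1)%g t); rewrite /= permKV -Hw permKV.
  by have := H (s t); rewrite /= Hw.
case: ifP => // _; congr EFin.
rewrite [RHS](reindex_inj (@perm_inj _ s)); apply: eq_bigr => y _ /=.
by rewrite Hw.
Qed.

Lemma Gbar_Df_ninfty (R : realType) (Y : finType) (G f : R -> R) (w q : Y -> R) :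
  Gbar G (Df f w q) != -oo%E.
Proof. by rewrite /Df; case: ifP. Qed.

Theorem proposition1 (R : realType) (X Y : finType)
  (f : R -> R) (G : R -> R) (W : X -> Y -> R) :
  convex_on_nonneg f ->
  f 1 = 0 ->
  (forall s t, 0 <= s -> s <= t -> (t%:E < Dm f)%E -> G s <= G t) ->
  (forall t, 0 <= t -> (t%:E < Dm f)%E -> 0 <= G t) ->
  G 0 = 0 ->
  (forall x, is_dist (W x)) ->
  (forall pi : {perm X}, exists pi' : {perm Y},
      forall x y, W (pi x) (pi' y) = W x y) ->
  forall p : X -> R, is_dist p ->
    (IGf G f W p <= IGf G f W (@uniform_dist R X))%E.
Proof.
move=> _ _ _ _ _ Wd Hperm p [p0 p1].
rewrite /IGf; apply/ereal_infP => _ [q qd <-].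
case: (boolP [forall z, Df f (W z) q != +oo%E]) => Hfin.
  pose gr z := G (fine (Df f (W z) q)).
  have Eg z : Gbar G (Df f (W z) q) = (gr z)%:E.
    rewrite /gr; move/forallP/(_ z): Hfin; rewrite /Df; case: ifP => _ //; by rewrite eqxx.
  have [pi Hpi] := @avg_perm _ _ gr p p1.
  have [pi' Hpi'] := Hperm pi.
  apply: (@le_trans _ _ (\sum_x (p x)%:E * Gbar G (Df f (W x) (q \o pi')))%E).
    apply: ereal_inf_lbound; exists (q \o pi') => //.
    split => [t|]; first exact: qd.1.
    by have := qd.2; rewrite (reindex_perm pi').
  have E x : Df f (W x) (q \o pi') = Df f (W (pi x)) q.
    by apply: Df_perm => y; apply: Hpi'.
  under eq_bigr do rewrite E Eg -EFinM.
  under [X in (_ <= X)%E]eq_bigr do rewrite Eg -EFinM.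
  by rewrite !sumEFin lee_fin.
move/forallPn: Hfin => [z]; rewrite negbK => /eqP Hz.
have n0 : (0 < (#|X|%:R : R)^-1).
  by rewrite invr_gt0 ltr0n; apply/card_gt0P; exists z.
suff -> : (\sum_x (@uniform_dist R X x)%:E * Gbar G (Df f (W x) q))%E = +oo%E.
  exact: leey.
apply/esum_eqyP.
  move=> x _; have := @Gbar_Df_ninfty _ _ G f (W x) q.
  case: (Gbar G (Df f (W x) q)) => [r _| _|//]; first by [].
  by rewrite /uniform_dist gt0_muley ?lte_fin.
exists z; split => //.
by rewrite Hz /= /uniform_dist gt0_muley ?lte_fin.
Qed.
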